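(* For any real $\lambda$ and any $0<y<\pi/2$, \[ \left(\lambda\int_0^y \frac{\cos \lambda t}{\cos t}\,dt\right)^2+ \left(\lambda\int_0^y \frac{\sin \lambda t}{\cos t}\,dt-1\right)^2<\frac{1}{\cos^2 y}. \] *)

(* Defs.v *)
From Stdlib Require Import Reals.
From Coquelicot Require Import Coquelicot.

(* Main.v *)
Require Import Defs.
From Stdlib Require Import Reals.
From Coquelicot Require Import Coquelicot.
From Stdlib Require Import Lra Psatz.
Open Scope R_scope.
Definition Dd (r t : R) := cos t * cos t + sinh r * sinh r.
Definition h1 r t := cos t * cosh r / Dd r t.
Definition h2 r t := sin t * sinh r / Dd r t.
Definition hA r t := sin t * cosh r * (2 * (cos t * cos t) - Dd r t) / (Dd r t * Dd r t).
Definition hB r t := cos t * sinh r * (Dd r t + 2 * (sin t * sin t)) / (Dd r t * Dd r t).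

Lemma d_mult (f g : R -> R) (x df dg : R) : is_derive f x df -> is_derive g x dg -> is_derive (fun x => f x * g x) x (df * g x + f x * dg).
Proof. intros H1 H2. apply (is_derive_mult f g x df dg H1 H2). intros; apply Rmult_comm. Qed.
Lemma d_plus (f g : R -> R) (x df dg : R) : is_derive f x df -> is_derive g x dg -> is_derive (fun x => f x + g x) x (df + dg).
Proof. intros H1 H2. apply (is_derive_plus f g x df dg H1 H2). Qed.
Lemma d_minus (f g : R -> R) (x df dg : R) : is_derive f x df -> is_derive g x dg -> is_derive (fun x => f x - g x) x (df - dg).
Proof. intros H1 H2. apply (is_derive_minus f g x df dg H1 H2). Qed.
Lemma d_div (f g : R -> R) (x df dg : R) : is_derive f x df -> is_derive g x dg -> g x <> 0 -> is_derive (fun x => f x / g x) x ((df * g x - f x * dg) / (g x * g x)).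
Proof. intros H1 H2 H3. replace (g x * g x) with (g x ^ 2) by ring. apply (is_derive_div f g x df dg H1 H2 H3). Qed.
Lemma d_const (c : R) x : is_derive (fun _ => c) x 0.
Proof. apply (is_derive_const c x). Qed.
Lemma d_sinh x : is_derive sinh x (cosh x).
Proof. unfold sinh, cosh. auto_derive; auto. field. Qed.
Lemma d_cosh x : is_derive cosh x (sinh x).
Proof. unfold sinh, cosh. auto_derive; auto. field. Qed.
Lemma ch2 x : cosh x * cosh x = 1 + sinh x * sinh x.
Proof. unfold cosh, sinh. rewrite exp_Ropp. assert (exp x <> 0) by (apply Rgt_not_eq, exp_pos). field. auto. Qed.
Lemma sc2 x : sin x * sin x = 1 - cos x * cos x.
Proof. generalize (sin2_cos2 x); unfold Rsqr; lra. Qed.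

Lemma ch2' x : cosh x ^ 2 = 1 + sinh x * sinh x.
Proof. rewrite <- ch2; ring. Qed.
Lemma sc2' x : sin x ^ 2 = 1 - cos x * cos x.
Proof. rewrite <- sc2; ring. Qed.
Lemma dDr r t : is_derive (fun r => Dd r t) r (2 * sinh r * cosh r).
Proof. unfold Dd. eapply is_derive_ext. intros; reflexivity.
  replace (2 * sinh r * cosh r) with (0 + (cosh r * sinh r + sinh r * cosh r)) by ring.
  apply d_plus. apply d_const. apply d_mult; apply d_sinh. Qed.

Lemma d_eq (f : R -> R) (x l l' : R) : is_derive f x l -> l = l' -> is_derive f x l'.
Proof. intros H <-; exact H. Qed.

Lemma dh1r r t : Dd r t <> 0 -> is_derive (fun r => h1 r t) r (- hB r t).
Proof. intro H. unfold h1.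
  eapply d_eq. apply (d_div (fun r => cos t * cosh r) (fun r => Dd r t) r _ _ 
     (d_mult (fun _ => cos t) cosh r _ _ (d_const (cos t) r) (d_cosh r)) (dDr r t) H).
  unfold hB. field_simplify_eq; auto. unfold Dd. rewrite ?ch2', ?sc2'. ring. Qed.
Lemma dh2r r t : Dd r t <> 0 -> is_derive (fun r => h2 r t) r (hA r t).
Proof. intro H. unfold h2.
  eapply d_eq. apply (d_div (fun r => sin t * sinh r) (fun r => Dd r t) r _ _ 
     (d_mult (fun _ => sin t) sinh r _ _ (d_const (sin t) r) (d_sinh r)) (dDr r t) H).
  unfold hA. field_simplify_eq; auto. unfold Dd. rewrite ?ch2', ?sc2'. ring. Qed.
Lemma dh1t r t : Dd r t <> 0 -> is_derive (fun t => h1 r t) t (hA r t).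
Proof. intro H. unfold h1, hA. unfold Dd in *. auto_derive. auto. field. auto. Qed.
Lemma dh2t r t : Dd r t <> 0 -> is_derive (fun t => h2 r t) t (hB r t).
Proof. intro H. unfold h2, hB. unfold Dd in *. auto_derive. auto. field_simplify_eq; auto. all: rewrite ?ch2', ?sc2'; ring. Qed.

Definition g1 lam r t := exp (- lam * r) * cos (lam * t).
Definition g2 lam r t := exp (- lam * r) * sin (lam * t).
Definition PP lam r t := g1 lam r t * h1 r t - g2 lam r t * h2 r t.
Definition QQ lam r t := g1 lam r t * h2 r t + g2 lam r t * h1 r t.
Definition dP lam r t := - lam * PP lam r t - (g1 lam r t * hB r t + g2 lam r t * hA r t).
Definition dQ lam r t := - lam * QQ lam r t + g1 lam r t * hA r t - g2 lam r t * hB r t.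

Lemma dg1r lam r t : is_derive (fun r => g1 lam r t) r (- lam * g1 lam r t).
Proof. unfold g1. auto_derive; auto. ring. Qed.
Lemma dg2r lam r t : is_derive (fun r => g2 lam r t) r (- lam * g2 lam r t).
Proof. unfold g2. auto_derive; auto. ring. Qed.
Lemma dg1t lam r t : is_derive (fun t => g1 lam r t) t (- lam * g2 lam r t).
Proof. unfold g1, g2. auto_derive; auto. ring. Qed.
Lemma dg2t lam r t : is_derive (fun t => g2 lam r t) t (lam * g1 lam r t).
Proof. unfold g1, g2. auto_derive; auto. ring. Qed.

Lemma dPr lam r t : Dd r t <> 0 -> is_derive (fun r => PP lam r t) r (dP lam r t).
Proof. intro H. unfold PP. eapply d_eq.
  apply d_minus; apply d_mult; auto using dg1r, dg2r, dh1r, dh2r.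
  unfold dP, PP. ring. Qed.
Lemma dQr lam r t : Dd r t <> 0 -> is_derive (fun r => QQ lam r t) r (dQ lam r t).
Proof. intro H. unfold QQ. eapply d_eq.
  apply d_plus; apply d_mult; auto using dg1r, dg2r, dh1r, dh2r.
  unfold dQ, QQ. ring. Qed.
Lemma dPt lam r t : Dd r t <> 0 -> is_derive (fun t => PP lam r t) t (dQ lam r t).
Proof. intro H. unfold PP. eapply d_eq.
  apply d_minus; apply d_mult; auto using dg1t, dg2t, dh1t, dh2t.
  unfold dQ, QQ. ring. Qed.
Lemma dQt lam r t : Dd r t <> 0 -> is_derive (fun t => QQ lam r t) t (- dP lam r t).
Proof. intro H. unfold QQ. eapply d_eq.
  apply d_plus; apply d_mult; auto using dg1t, dg2t, dh1t, dh2t.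
  unfold dP, PP. ring. Qed.

Lemma cder (f : R -> R) (x : R) : ex_derive f x -> continuous f x.
Proof. apply (ex_derive_continuous (K := R_AbsRing) (V := R_NormedModule)). Qed.

Lemma c2_to_v f x y : continuity_2d_pt f x y -> continuous (fun v => f x v) y.
Proof. intro H. apply continuity_pt_filterlim.
  unfold continuity_pt, continue_in, limit1_in, limit_in. intros eps Heps.
  destruct (H (mkposreal eps Heps)) as [d Hd]. exists d. split. apply cond_pos.
  intros v [_ Hv]. simpl in *. unfold R_dist in *. apply Hd; auto.
  rewrite Rminus_eq_0, Rabs_R0; apply cond_pos. Qed.
Lemma c2_to_u f x y : continuity_2d_pt f x y -> continuous (fun u => f u y) x.
Proof. intro H. apply continuity_pt_filterlim.
  unfold continuity_pt, continue_in, limit1_in, limit_in. intros eps Heps.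
  destruct (H (mkposreal eps Heps)) as [d Hd]. exists d. split. apply cond_pos.
  intros v [_ Hv]. simpl in *. unfold R_dist in *. apply Hd; auto.
  rewrite Rminus_eq_0, Rabs_R0; apply cond_pos. Qed.

Lemma c2_fu (f : R -> R) x y : continuous f x -> continuity_2d_pt (fun u v => f u) x y.
Proof. intro H. apply (continuity_1d_2d_pt_comp f (fun u v => u)).
  apply continuity_pt_filterlim; exact H. apply continuity_2d_pt_id1. Qed.
Lemma c2_fv (f : R -> R) x y : continuous f y -> continuity_2d_pt (fun u v => f v) x y.
Proof. intro H. apply (continuity_1d_2d_pt_comp f (fun u v => v)).
  apply continuity_pt_filterlim; exact H. apply continuity_2d_pt_id2. Qed.

Lemma c2_exp lam x y : continuity_2d_pt (fun u v => exp (- lam * u)) x y.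
Proof. apply (c2_fu (fun u => exp (- lam * u))). apply cder. auto_derive; auto. Qed.
Lemma c2_cosl lam x y : continuity_2d_pt (fun u v => cos (lam * v)) x y.
Proof. apply (c2_fv (fun v => cos (lam * v))). apply cder. auto_derive; auto. Qed.
Lemma c2_sinl lam x y : continuity_2d_pt (fun u v => sin (lam * v)) x y.
Proof. apply (c2_fv (fun v => sin (lam * v))). apply cder. auto_derive; auto. Qed.
Lemma c2_cos x y : continuity_2d_pt (fun u v => cos v) x y.
Proof. apply (c2_fv cos). apply cder. auto_derive; auto. Qed.
Lemma c2_sin x y : continuity_2d_pt (fun u v => sin v) x y.
Proof. apply (c2_fv sin). apply cder. auto_derive; auto. Qed.
Lemma c2_cosh x y : continuity_2d_pt (fun u v => cosh u) x y.
Proof. apply (c2_fu cosh). apply cder. eexists; apply d_cosh. Qed.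
Lemma c2_sinh x y : continuity_2d_pt (fun u v => sinh u) x y.
Proof. apply (c2_fu sinh). apply cder. eexists; apply d_sinh. Qed.
Lemma c2_Dd x y : continuity_2d_pt (fun u v => Dd u v) x y.
Proof. unfold Dd. apply continuity_2d_pt_plus; apply continuity_2d_pt_mult;
  auto using c2_cos, c2_sinh. Qed.
Lemma c2_iDd x y : Dd x y <> 0 -> continuity_2d_pt (fun u v => / Dd u v) x y.
Proof. intro H. apply (continuity_2d_pt_inv (fun u v => Dd u v)); auto using c2_Dd. Qed.
Lemma c2_iDd2 x y : Dd x y <> 0 -> continuity_2d_pt (fun u v => / (Dd u v * Dd u v)) x y.
Proof. intro H. apply (continuity_2d_pt_inv (fun u v => Dd u v * Dd u v)).
  apply continuity_2d_pt_mult; auto using c2_Dd. apply Rmult_integral_contrapositive; auto. Qed.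

Ltac c2 := repeat first [ apply c2_iDd2 | apply c2_iDd | apply c2_Dd 
  | apply continuity_2d_pt_const | apply c2_exp | apply c2_cosl | apply c2_sinl | apply c2_cos
  | apply c2_sin | apply c2_cosh | apply c2_sinh | apply continuity_2d_pt_plus | apply continuity_2d_pt_minus
  | apply continuity_2d_pt_opp | apply continuity_2d_pt_mult ].

Lemma c2_dP lam x y : Dd x y <> 0 -> continuity_2d_pt (fun u v => dP lam u v) x y.
Proof. intro H. unfold dP, dQ, PP, QQ, g1, g2, h1, h2, hA, hB, Rdiv. c2; auto. Qed.
Lemma c2_dQ lam x y : Dd x y <> 0 -> continuity_2d_pt (fun u v => dQ lam u v) x y.
Proof. intro H. unfold dP, dQ, PP, QQ, g1, g2, h1, h2, hA, hB, Rdiv. c2; auto. Qed.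

Lemma d_opp (f : R -> R) (x df : R) : is_derive f x df -> is_derive (fun x => - f x) x (- df).
Proof. intro H. apply (is_derive_opp f x df H). Qed.

Lemma Dd_pos r t : - (PI / 2) < t < PI / 2 -> 0 < Dd r t.
Proof. intro H. unfold Dd. assert (0 < cos t) by (apply cos_gt_0; lra). nra. Qed.
Lemma Dd_nz r t : - (PI / 2) < t < PI / 2 -> Dd r t <> 0.
Proof. intro H. apply Rgt_not_eq, Dd_pos, H. Qed.

Lemma PI2_pos : 0 < PI / 2.
Proof. generalize PI_RGT_0; lra. Qed.

Lemma loc2 y t (P : R -> R -> Prop) r : 0 <= y < PI / 2 -> 0 <= t <= y ->
  (forall u v, - (PI / 2) < v < PI / 2 -> P u v) -> locally_2d P r t.
Proof. intros Hy Ht H. assert (Hd : 0 < PI / 2 - y) by lra. exists (mkposreal _ Hd).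
  intros u v _ Hv. simpl in Hv. apply H. apply Rabs_def2 in Hv. lra. Qed.

Lemma IP_deriv lam y r : 0 <= y < PI / 2 ->
  is_derive (fun r => RInt (fun t => PP lam r t) 0 y) r (- (QQ lam r y - QQ lam r 0)).
Proof. intro Hy. assert (Hmm: Rmin 0 y = 0 /\ Rmax 0 y = y) by (split; [apply Rmin_left|apply Rmax_right]; lra).
  destruct Hmm as [Hm1 Hm2].
  eapply d_eq. apply is_derive_RInt_param.
  - apply filter_forall. intros r' t Ht. rewrite Hm1, Hm2 in Ht. exists (dP lam r' t). apply dPr. apply Dd_nz. lra.
  - intros t Ht. rewrite Hm1, Hm2 in Ht. apply continuity_2d_pt_ext_loc with (f := fun u v => dP lam u v).
    apply (loc2 y t); auto. intros u v Hv. symmetry. apply is_derive_unique. apply dPr. apply Dd_nz. lra.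
    apply c2_dP. apply Dd_nz. lra.
  - apply filter_forall; intro r'. apply (ex_RInt_continuous (V := R_CompleteNormedModule)); intros t Ht. rewrite Hm1, Hm2 in Ht.
    apply cder. exists (dQ lam r' t); apply dPt. apply Dd_nz. lra.
  - rewrite (RInt_ext _ (fun t => dP lam r t)).
    2: { intros t Ht. rewrite Hm1, Hm2 in Ht. apply is_derive_unique. apply dPr. apply Dd_nz. lra. }
    assert (H : is_RInt (fun t => - dP lam r t) 0 y (QQ lam r y - QQ lam r 0)).
    { apply (is_RInt_derive (fun t => QQ lam r t) (fun t => - dP lam r t)).
      intros t Ht. rewrite Hm1, Hm2 in Ht. apply dQt. apply Dd_nz. lra.
      intros t Ht. rewrite Hm1, Hm2 in Ht. apply (c2_to_v (fun u v => - dP lam u v)).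
      apply continuity_2d_pt_opp. apply c2_dP. apply Dd_nz. lra. }
    apply is_RInt_opp in H. apply is_RInt_unique.
    eapply is_RInt_ext. 2: exact H. intros; simpl. unfold opp; simpl. ring.
Qed.

Lemma IQ_deriv lam y r : 0 <= y < PI / 2 ->
  is_derive (fun r => RInt (fun t => QQ lam r t) 0 y) r (PP lam r y - PP lam r 0).
Proof. intro Hy. assert (Hmm: Rmin 0 y = 0 /\ Rmax 0 y = y) by (split; [apply Rmin_left|apply Rmax_right]; lra).
  destruct Hmm as [Hm1 Hm2].
  eapply d_eq. apply is_derive_RInt_param.
  - apply filter_forall. intros r' t Ht. rewrite Hm1, Hm2 in Ht. exists (dQ lam r' t). apply dQr. apply Dd_nz. lra.
  - intros t Ht. rewrite Hm1, Hm2 in Ht. apply continuity_2d_pt_ext_loc with (f := fun u v => dQ lam u v).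
    apply (loc2 y t); auto. intros u v Hv. symmetry. apply is_derive_unique. apply dQr. apply Dd_nz. lra.
    apply c2_dQ. apply Dd_nz. lra.
  - apply filter_forall; intro r'. apply (ex_RInt_continuous (V := R_CompleteNormedModule)); intros t Ht. rewrite Hm1, Hm2 in Ht.
    apply cder. exists (- dP lam r' t); apply dQt. apply Dd_nz. lra.
  - rewrite (RInt_ext _ (fun t => dQ lam r t)).
    2: { intros t Ht. rewrite Hm1, Hm2 in Ht. apply is_derive_unique. apply dQr. apply Dd_nz. lra. }
    apply is_RInt_unique.
    apply (is_RInt_derive (fun t => PP lam r t) (fun t => dQ lam r t)).
      intros t Ht. rewrite Hm1, Hm2 in Ht. apply dPt. apply Dd_nz. lra.
      intros t Ht. rewrite Hm1, Hm2 in Ht. apply (c2_to_v (fun u v => dQ lam u v)).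
      apply c2_dQ. apply Dd_nz. lra.
Qed.

Lemma ycond y t : 0 <= y < PI / 2 -> (t = 0 \/ t = y) -> - (PI / 2) < t < PI / 2.
Proof. generalize PI2_pos. intros; destruct H1; subst; lra. Qed.

Lemma IP_rect lam y R : 0 <= y < PI / 2 ->
  is_RInt (fun r => - (QQ lam r y - QQ lam r 0)) 0 R
    (RInt (fun t => PP lam R t) 0 y - RInt (fun t => PP lam 0 t) 0 y).
Proof. intro Hy.
  apply (is_RInt_derive (fun r => RInt (fun t => PP lam r t) 0 y)).
  intros; apply IP_deriv; auto.
  intros r _. apply cder. eexists. apply d_opp. apply d_minus; apply dQr; apply Dd_nz; apply (ycond y); auto.
Qed.
Lemma IQ_rect lam y R : 0 <= y < PI / 2 ->
  is_RInt (fun r => PP lam r y - PP lam r 0) 0 R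
    (RInt (fun t => QQ lam R t) 0 y - RInt (fun t => QQ lam 0 t) 0 y).
Proof. intro Hy.
  apply (is_RInt_derive (fun r => RInt (fun t => QQ lam r t) 0 y)).
  intros; apply IQ_deriv; auto.
  intros r _. apply cder. eexists. apply d_minus; apply dPr; apply Dd_nz; apply (ycond y); auto.
Qed.
Lemma alg0 co ch : 0 < co <= 1 -> 1 <= ch ->
  (ch - co*ch + co)^2 * (co*co + ch*ch - 1) >= co*co*ch*ch.
Proof. intros. 
  assert (E : (ch - co*ch + co)^2 * (co*co + ch*ch - 1) - co*co*ch*ch =
     (ch - 1) * ((ch - co*ch + co)^2 * (ch + 1) - co^3 * ((ch - co*ch + co) + ch))) by ring.
  set (u := ch - co*ch + co) in *.
  assert (Hu : u >= co) by (unfold u; nra).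
  assert (Hc3 : co^3 <= co) by (simpl; nra).
  assert (Hc3' : co^3 <= co^2) by (simpl; nra).
  assert (H1 : u^2 >= co^3 * u). { assert (u^2 >= co * u) by (simpl; nra). nra. }
  assert (H2 : u^2 * ch >= co^3 * ch). { assert (u^2 >= co^2) by (simpl; nra). nra. }
  assert (0 <= (u ^ 2 * (ch + 1) - co ^ 3 * (u + ch))) by nra.
  assert (0 <= (ch - 1) * (u ^ 2 * (ch + 1) - co ^ 3 * (u + ch))) by (apply Rmult_le_pos; lra).
  lra.
Qed.

Lemma hpq m co si ch sh Cl Sl :
  si*si = 1 - co*co -> ch*ch = 1 + sh*sh -> Cl*Cl + Sl*Sl = 1 -> co*co + sh*sh <> 0 ->
  (m*Cl*(co*ch/(co*co + sh*sh)) - m*Sl*(si*sh/(co*co + sh*sh)))^2 +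
  (m*Cl*(si*sh/(co*co + sh*sh)) + m*Sl*(co*ch/(co*co + sh*sh)))^2 = m*m/(co*co + sh*sh).
Proof. intros H1 H2 H3 H4.
  assert (E : (m*Cl*(co*ch/(co*co + sh*sh)) - m*Sl*(si*sh/(co*co + sh*sh)))^2 +
  (m*Cl*(si*sh/(co*co + sh*sh)) + m*Sl*(co*ch/(co*co + sh*sh)))^2 =
   m*m*(Cl*Cl+Sl*Sl)*(co*co*(ch*ch) + si*si*(sh*sh))/((co*co + sh*sh)*(co*co+sh*sh))) by (field; auto).
  rewrite E, H1, H2, H3. field. auto. Qed.

Lemma sq_le a b : 0 <= b -> a^2 <= b^2 -> a <= b.
Proof. intros. nra. Qed.

Lemma pw1 c s m co si ch sh Cl Sl :
  c*c + s*s = 1 -> 0 < m -> 0 < co <= 1 -> si*si = 1 - co*co -> ch*ch = 1 + sh*sh -> 1 <= ch ->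
  Cl*Cl + Sl*Sl = 1 ->
  c*(m*Cl*(si*sh/(co*co + sh*sh)) + m*Sl*(co*ch/(co*co + sh*sh)))
  - s*(m*Cl*(co*ch/(co*co + sh*sh)) - m*Sl*(si*sh/(co*co + sh*sh))) + s*(m/ch - m) <= m/co.
Proof. intros Hcs Hm Hco Hsi Hch Hch1 HCl.
  assert (HD : 0 < co*co + sh*sh) by nra.
  set (P := m*Cl*(co*ch/(co*co + sh*sh)) - m*Sl*(si*sh/(co*co + sh*sh))).
  set (Q := m*Cl*(si*sh/(co*co + sh*sh)) + m*Sl*(co*ch/(co*co + sh*sh))).
  assert (HPQ : P^2 + Q^2 = m*m/(co*co + sh*sh)) by (apply hpq; auto; lra).
  assert (H1 : (c*Q - s*P)^2 <= P^2 + Q^2).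
  { assert (E : (c*c+s*s)*(P^2+Q^2) - (c*Q - s*P)^2 = (c*P + s*Q)^2) by ring.
    rewrite Hcs in E. generalize (pow2_ge_0 (c*P + s*Q)) (pow2_ge_0 (c*Q - s*P)); intros; lra. }
  set (q := 1/co - 1 + 1/ch).
  assert (Hq : q = (ch - co*ch + co)/(co*ch)) by (unfold q; field; lra).
  assert (Hq0 : 0 <= q). { rewrite Hq. assert (0 <= ch*(1-co)) by (apply Rmult_le_pos; lra).
    apply Rle_mult_inv_pos. lra. apply Rmult_lt_0_compat; lra. }
  assert (Hq2 : m*m/(co*co + sh*sh) <= (m*q)^2).
  { assert (A := alg0 co ch Hco Hch1).
    replace (co*co + ch*ch - 1) with (co*co + sh*sh) in A by lra.
    rewrite Hq. unfold Rdiv. 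
    apply Rle_trans with (m*m * ((ch - co*ch + co)^2 * (co*co+sh*sh)/(co*co*ch*ch)) / (co*co+sh*sh)).
    - unfold Rdiv. apply Rmult_le_compat_r. left; apply Rinv_0_lt_compat; lra.
      rewrite <- (Rmult_1_r (m*m)) at 1. apply Rmult_le_compat_l. nra.
      apply (Rmult_le_reg_r (co*co*ch*ch)). nra. field_simplify; nra.
    - right. field. split; nra. }
  assert (H3 : c*Q - s*P <= m*q). { apply sq_le. nra. lra. }
  assert (H4 : s*(m/ch - m) <= m*(1 - 1/ch)).
  { assert (0 <= 1 - 1/ch). { assert (1/ch <= 1). { unfold Rdiv; rewrite Rmult_1_l. rewrite <- Rinv_1. apply Rinv_le_contravar; lra. } lra. }
    assert (s <= 1 /\ -1 <= s) by (split; nra).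
    replace (m/ch - m) with (- (m*(1 - 1/ch))) by (field; lra).
    assert (0 <= m*(1 - 1/ch)) by nra. nra. }
  assert (E2 : m*q + m*(1 - 1/ch) = m/co) by (unfold q; field; lra).
  lra.
Qed.

Lemma pw2 c s m co si ch sh Cl Sl :
  c*c + s*s = 1 -> 0 < m -> 0 < sh -> si*si = 1 - co*co -> ch*ch = 1 + sh*sh ->
  Cl*Cl + Sl*Sl = 1 ->
  c*(m*Cl*(co*ch/(co*co + sh*sh)) - m*Sl*(si*sh/(co*co + sh*sh)))
  + s*(m*Cl*(si*sh/(co*co + sh*sh)) + m*Sl*(co*ch/(co*co + sh*sh))) <= m/sh.
Proof. intros Hcs Hm Hsh Hsi Hch HCl.
  assert (HD : 0 < co*co + sh*sh) by nra.
  set (P := m*Cl*(co*ch/(co*co + sh*sh)) - m*Sl*(si*sh/(co*co + sh*sh))).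
  set (Q := m*Cl*(si*sh/(co*co + sh*sh)) + m*Sl*(co*ch/(co*co + sh*sh))).
  assert (HPQ : P^2 + Q^2 = m*m/(co*co + sh*sh)) by (apply hpq; auto; lra).
  assert (H1 : (c*P + s*Q)^2 <= P^2 + Q^2).
  { assert (E : (c*c+s*s)*(P^2+Q^2) - (c*P + s*Q)^2 = (c*Q - s*P)^2) by ring.
    rewrite Hcs in E. generalize (pow2_ge_0 (c*P + s*Q)) (pow2_ge_0 (c*Q - s*P)); intros; lra. }
  apply sq_le. apply Rle_mult_inv_pos; lra.
  apply Rle_trans with (P^2+Q^2). exact H1. rewrite HPQ.
  replace ((m/sh)^2) with (m*m/(sh*sh)) by (field; lra).
  unfold Rdiv. apply Rmult_le_compat_l. nra. apply Rinv_le_contravar; nra.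
Qed.
Lemma iR_plus (f g : R -> R) (a b If Ig : R) : is_RInt f a b If -> is_RInt g a b Ig -> is_RInt (fun x => f x + g x) a b (If + Ig).
Proof. intros. apply (is_RInt_plus f g a b If Ig); auto. Qed.
Lemma iR_minus (f g : R -> R) (a b If Ig : R) : is_RInt f a b If -> is_RInt g a b Ig -> is_RInt (fun x => f x - g x) a b (If - Ig).
Proof. intros. apply (is_RInt_minus f g a b If Ig); auto. Qed.
Lemma iR_scal (f : R -> R) (a b k If : R) : is_RInt f a b If -> is_RInt (fun x => k * f x) a b (k * If).
Proof. intros. apply (is_RInt_scal f a b k If); auto. Qed.
Lemma iR_opp (f : R -> R) (a b If : R) : is_RInt f a b If -> is_RInt (fun x => - f x) a b (- If).
Proof. intros. apply (is_RInt_opp f a b If); auto. Qed.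
Lemma iR_const (c a b : R) : is_RInt (fun _ => c) a b ((b - a) * c).
Proof. apply (is_RInt_const a b c). Qed.
Lemma iR_le (f g : R -> R) (a b If Ig : R) : a <= b -> is_RInt f a b If -> is_RInt g a b Ig ->
  (forall x, a < x < b -> f x <= g x) -> If <= Ig.
Proof. intros. apply (is_RInt_le f g a b If Ig); auto. Qed.
Lemma iR_ext (f g : R -> R) (a b If : R) : (forall x, f x = g x) -> is_RInt f a b If -> is_RInt g a b If.
Proof. intros H. apply is_RInt_ext. intros; apply H. Qed.
Lemma iR_correct (f : R -> R) (a b : R) : ex_RInt f a b -> is_RInt f a b (RInt f a b).
Proof. intros; apply (RInt_correct (V := R_CompleteNormedModule)); auto. Qed.
Lemma iR_exp lam R : is_RInt (fun r => lam * exp (- lam * r)) 0 R (1 - exp (- lam * R)).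
Proof. replace (1 - exp (- lam * R)) with ((- exp (- lam * R)) - (- exp (- lam * 0))) by (rewrite Rmult_0_r, exp_0; ring).
  apply (is_RInt_derive (fun r => - exp (- lam * r)) (fun r => lam * exp (- lam * r))).
  intros; auto_derive; auto; ring.
  intros. apply (ex_derive_continuous (K := R_AbsRing) (V := R_NormedModule)). auto_derive; auto. Qed.

Lemma QQ0 lam r : QQ lam r 0 = 0.
Proof. unfold QQ, g1, g2, h1, h2. rewrite Rmult_0_r, sin_0. unfold Rdiv. ring. Qed.
Lemma cosh_pos x : 0 < cosh x.
Proof. unfold cosh. generalize (exp_pos x) (exp_pos (-x)); lra. Qed.
Lemma cosh_ge1 x : 1 <= cosh x.
Proof. generalize (ch2 x) (cosh_pos x); intros; nra. Qed.
Lemma PP0 lam r : PP lam r 0 = exp (- lam * r) / cosh r.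
Proof. unfold PP, g1, g2, h1, h2, Dd. rewrite Rmult_0_r, sin_0, cos_0.
  assert (cosh r <> 0) by (apply Rgt_not_eq, cosh_pos).
  replace (1 * 1 + sinh r * sinh r) with (cosh r * cosh r) by (rewrite ch2; ring).
  field. auto. Qed.
Lemma cs1 x : cos x * cos x + sin x * sin x = 1.
Proof. generalize (sin2_cos2 x); unfold Rsqr; lra. Qed.
Lemma sc3 x : sin x * sin x = 1 - cos x * cos x.
Proof. apply sc2. Qed.

Lemma exP lam r y : 0 <= y < PI / 2 -> ex_RInt (fun t => PP lam r t) 0 y.
Proof. intro Hy. apply (ex_RInt_continuous (V := R_CompleteNormedModule)); intros t Ht.
  rewrite Rmin_left, Rmax_right in Ht by lra.
  apply cder. exists (dQ lam r t); apply dPt. apply Dd_nz. generalize PI2_pos; lra. Qed.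
Lemma exQ lam r y : 0 <= y < PI / 2 -> ex_RInt (fun t => QQ lam r t) 0 y.
Proof. intro Hy. apply (ex_RInt_continuous (V := R_CompleteNormedModule)); intros t Ht.
  rewrite Rmin_left, Rmax_right in Ht by lra.
  apply cder. exists (- dP lam r t); apply dQt. apply Dd_nz. generalize PI2_pos; lra. Qed.

Lemma pw1' lam c s y r : c*c + s*s = 1 -> 0 < y < PI / 2 ->
  c * QQ lam r y - s * PP lam r y + s * (PP lam r 0 - exp (- lam * r)) <= exp (- lam * r) / cos y.
Proof. intros Hcs Hy. rewrite PP0.
  assert (Hco : 0 < cos y) by (apply cos_gt_0; generalize PI2_pos; lra).
  assert (Hco1 : cos y <= 1) by apply COS_bound.
  unfold PP, QQ, g1, g2, h1, h2, Dd.
  apply pw1; auto using exp_pos, sc3, ch2, cosh_ge1. first [apply cs1 | rewrite Rplus_comm; apply cs1]. Qed.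

Lemma pw2' lam c s t R : c*c + s*s = 1 -> 0 < R ->
  c * PP lam R t + s * QQ lam R t <= exp (- lam * R) / sinh R.
Proof. intros Hcs HR.
  assert (0 < sinh R) by (rewrite <- sinh_0; apply sinh_lt; auto).
  unfold PP, QQ, g1, g2, h1, h2, Dd.
  apply pw2; auto using exp_pos, sc3, ch2. first [apply cs1 | rewrite Rplus_comm; apply cs1]. Qed.

Lemma main_pos lam y c s : 0 <= lam -> 0 < y < PI / 2 -> c*c + s*s = 1 ->
  c * (lam * RInt (fun t => PP lam 0 t) 0 y) + s * (lam * RInt (fun t => QQ lam 0 t) 0 y - 1) < 1 / cos y.
Proof. intros Hl Hy Hcs.
  assert (Hy' : 0 <= y < PI / 2) by lra.
  assert (Hco : 0 < cos y) by (apply cos_gt_0; generalize PI2_pos; lra).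
  assert (Hco1 : cos y < 1).
  { assert (0 < sin y) by (apply sin_gt_0; generalize PI2_pos; lra). generalize (cs1 y); nra. }
  set (d := 1 / cos y - 1).
  assert (Hd : 0 < d). { unfold d. assert (1 < 1 / cos y). { apply (Rmult_lt_reg_r (cos y)); auto. field_simplify; lra. } lra. }
  set (K := lam * y / d).
  assert (HK : 0 <= K) by (unfold K; apply Rle_mult_inv_pos; nra).
  set (R := ln (2 * K + 2)).
  assert (HeR : exp R = 2 * K + 2) by (unfold R; apply exp_ln; lra).
  assert (HR : 0 < R). { unfold R. rewrite <- ln_1. apply ln_increasing; lra. }
  assert (Hsh : K < sinh R).
  { unfold sinh. rewrite exp_Ropp, HeR. assert (/ (2*K+2) <= 1). { rewrite <- Rinv_1. apply Rinv_le_contravar; lra. } lra. }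
  assert (Hsh0 : 0 < sinh R) by lra.
  set (e := exp (- lam * R)).
  assert (He : 0 < e) by apply exp_pos.
  set (a0 := RInt (fun t => PP lam 0 t) 0 y).
  set (b0 := RInt (fun t => QQ lam 0 t) 0 y).
  set (aR := RInt (fun t => PP lam R t) 0 y).
  set (bR := RInt (fun t => QQ lam R t) 0 y).
  assert (IaR := iR_correct _ _ _ (exP lam R y Hy')). fold aR in IaR.
  assert (IbR := iR_correct _ _ _ (exQ lam R y Hy')). fold bR in IbR.
  assert (IP := IP_rect lam y R Hy'). fold a0 aR in IP.
  assert (IQ := IQ_rect lam y R Hy'). fold b0 bR in IQ.
  assert (IE := iR_exp lam R). fold e in IE.
  assert (H1 : c * (lam * aR) + s * (lam * bR) <= (y - 0) * (lam * (e / sinh R))).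
  { apply (iR_le (fun t => c * (lam * PP lam R t) + s * (lam * QQ lam R t)) (fun _ => lam * (e / sinh R)) 0 y).
    lra. apply iR_plus; apply iR_scal; apply iR_scal; auto. apply iR_const.
    intros t _. assert (A := pw2' lam c s t R Hcs HR). fold e in A.
    replace (c * (lam * PP lam R t) + s * (lam * QQ lam R t)) with (lam * (c * PP lam R t + s * QQ lam R t)) by ring.
    apply Rmult_le_compat_l; auto. }
  assert (H2 : - (/ cos y) * (1 - e) <= c * (lam * (aR - a0)) + s * (lam * (bR - b0)) + s * (1 - e)).
  { apply (iR_le (fun r => - (/ cos y) * (lam * exp (- lam * r))) (fun r => c * (lam * (- (QQ lam r y - QQ lam r 0))) + s * (lam * (PP lam r y - PP lam r 0)) + s * (lam * exp (- lam * r))) 0 R).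
    lra. apply iR_scal; auto.
    apply iR_plus; [apply iR_plus|]; apply iR_scal; auto; apply iR_scal; auto.
    intros r _. rewrite QQ0. assert (A := pw1' lam c s y r Hcs Hy).
    assert (B := Rmult_le_compat_l lam _ _ Hl A). unfold Rdiv in B. lra. }
  assert (Hs1 : -1 <= s) by nra.
  assert (Hq : lam * y < d * sinh R).
  { replace (lam * y) with (K * d) by (unfold K; field; lra). nra. }
  assert (Hq2 : (y - 0) * (lam * (e / sinh R)) < e * d).
  { replace ((y - 0) * (lam * (e / sinh R))) with (e * (lam * y) / sinh R) by (field; lra).
    apply (Rmult_lt_reg_r (sinh R)); auto. field_simplify; [|lra]. nra. }
  assert (Hcd : 1 / cos y = d + 1) by (unfold d; ring).
  assert (Hse : - (s * e) <= e) by nra.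
  fold a0 b0. rewrite Hcd. unfold Rdiv in *. 
  assert (Hinv : / cos y = d + 1) by (rewrite <- Hcd; unfold Rdiv; ring).
  rewrite Hinv in H2. nra.
Qed.

Lemma PP0t lam t : cos t <> 0 -> PP lam 0 t = cos (lam * t) / cos t.
Proof. intro H. unfold PP, g1, g2, h1, h2, Dd. rewrite sinh_0, cosh_0, Rmult_0_r, exp_0. field.
  all: try (split; auto); try rewrite Rmult_0_r, Rplus_0_r; try apply Rmult_integral_contrapositive; auto. Qed.
Lemma QQ0t lam t : cos t <> 0 -> QQ lam 0 t = sin (lam * t) / cos t.
Proof. intro H. unfold QQ, g1, g2, h1, h2, Dd. rewrite sinh_0, cosh_0, Rmult_0_r, exp_0. field.
  all: try (split; auto); try rewrite Rmult_0_r, Rplus_0_r; try apply Rmult_integral_contrapositive; auto. Qed.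

Lemma cosnz y t : 0 < y < PI / 2 -> Rmin 0 y < t < Rmax 0 y -> cos t <> 0.
Proof. intros Hy Ht. rewrite Rmin_left, Rmax_right in Ht by lra. apply Rgt_not_eq, cos_gt_0; generalize PI2_pos; lra. Qed.

Lemma RInt_extR (f g : R -> R) (a b : R) : (forall x : R, Rmin a b < x < Rmax a b -> f x = g x) -> RInt f a b = RInt g a b.
Proof. apply RInt_ext. Qed.

Lemma fin X Y M : 0 < M -> (forall c s, c*c + s*s = 1 -> c*X + s*Y < M) -> X^2 + Y^2 < M^2.
Proof. intros HM H. set (N := sqrt (X^2 + Y^2)).
  assert (HN : N * N = X^2 + Y^2) by (unfold N; apply sqrt_sqrt; nra).
  assert (HN0 : 0 <= N) by apply sqrt_pos.
  destruct (Req_dec N 0) as [E|E].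
  - rewrite <- HN, E. nra.
  - assert (HN1 : 0 < N) by lra.
    assert (A := H (X / N) (Y / N)).
    assert (B : X / N * X + Y / N * Y = N). { field_simplify; auto. rewrite <- HN. field. auto. }
    rewrite B in A. rewrite <- HN.
    assert (C : N < M). { apply A. replace (X / N * (X / N) + Y / N * (Y / N)) with ((X^2 + Y^2) / (N * N)) by (field; auto).
      rewrite <- HN. field. auto. }
    nra.
Qed.

Theorem theorem2 (lam y : R) (hy0 : 0 < y) (hy1 : y < PI / 2) :
  (lam * RInt (fun t => cos (lam * t) / cos t) 0 y) ^ 2
  + (lam * RInt (fun t => sin (lam * t) / cos t) 0 y - 1) ^ 2
  < 1 / (cos y) ^ 2.
Proof.
  assert (Hy : 0 < y < PI / 2) by lra.
  assert (Hy' : 0 <= y < PI / 2) by lra.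
  assert (Hco : 0 < cos y) by (apply cos_gt_0; generalize PI2_pos; lra).
  replace (1 / cos y ^ 2) with ((1 / cos y) ^ 2) by (field; lra).
  assert (HM : 0 < 1 / cos y) by (apply Rdiv_lt_0_compat; lra).
  destruct (Rle_or_lt 0 lam) as [Hl|Hl].
  - rewrite (RInt_extR _ (fun t => PP lam 0 t)) by (intros t Ht; symmetry; apply PP0t, (cosnz y); auto).
    rewrite (RInt_extR (fun t => sin (lam * t) / cos t) (fun t => QQ lam 0 t)) by (intros t Ht; symmetry; apply QQ0t, (cosnz y); auto).
    apply fin; auto. intros c s Hcs. apply main_pos; auto.
  - rewrite (RInt_extR _ (fun t => PP (- lam) 0 t)).
    2: { intros t Ht. rewrite PP0t by (apply (cosnz y); auto). replace (- lam * t) with (- (lam * t)) by ring. rewrite cos_neg. reflexivity. }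
    rewrite (RInt_extR (fun t => sin (lam * t) / cos t) (fun t => - QQ (- lam) 0 t)).
    2: { intros t Ht. rewrite QQ0t by (apply (cosnz y); auto). replace (- lam * t) with (- (lam * t)) by ring. rewrite sin_neg. field. apply (cosnz y); auto. }
    rewrite (is_RInt_unique (fun t => - QQ (- lam) 0 t) 0 y _ (iR_opp _ _ _ _ (iR_correct _ _ _ (exQ (- lam) 0 y Hy')))).
    apply fin; auto. intros c s Hcs.
    assert (A := main_pos (- lam) y (- c) s ltac:(lra) Hy ltac:(lra)).
    replace (c * (lam * RInt (fun t => PP (- lam) 0 t) 0 y) + s * (lam * - RInt (fun t => QQ (- lam) 0 t) 0 y - 1))
      with (- c * (- lam * RInt (fun t => PP (- lam) 0 t) 0 y) + s * (- lam * RInt (fun t => QQ (- lam) 0 t) 0 y - 1)) by ring.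
    exact A.
Qed.
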